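(* Let $X$ be a Banach space, let $\Pi=\{(x,y,f): x,y\in X,\ x\neq y,\ f\in D(x-y)\}\subset X\times X\times X^*$, and let $\pi:X\times X\times X^*\to X\times X$ be $\pi(x,y,f)=(x,y)$. If $Q\subset \Pi$ is such that $\pi(Q)$ is dense in $X\times X$, then for every $T\in\mathrm{Lip}_0(X)$, $$\omega(T)=\sup\Big\{\frac{|f(Tx-Ty)|}{\|x-y\|^2}: (x,y,f)\in Q\Big\}.$$ In particular, $\omega(T)$ may be computed by choosing one functional $f\in D(x-y)$ at each point $(x,y)$ of a dense subset of $X\times X$ (consisting of pairs with $x\ne y$).
   Context: $X$ is a Banach space over $\mathbb{K}=\mathbb{R}$ or $\mathbb{C}$. $\mathrm{Lip}_0(X)$ is the set of Lipschitz maps $T:X\to X$ with $T(0)=0$, normed by $\|T\|_L=\sup\{\|Tx-Ty\|/\|x-y\|: x\neq y\}$. For $x\in X$, $D(x)=\{x^*\in X^*: x^*(x)=\|x^*\|\|x\|=\|x\|^2\}$. For $T\in\mathrm{Lip}_0(X)$, $W(T)=\{ f(Tx-Ty)/\|x-y\|^2 : x\neq y,\ f\in D(x-y)\}$ and $\omega(T)=\sup\{|\lambda|:\lambda\in W(T)\}$. *)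

(* Defs.v *)
From Stdlib Require Import Reals.
Open Scope R_scope.

Record Scalars := {
  sc :> Type;
  sc0 : sc; sc1 : sc;
  scadd : sc -> sc -> sc;
  scmul : sc -> sc -> sc;
  scopp : sc -> sc;
  scabs : sc -> R;
  scR : R -> sc
}.

Definition R_scalars : Scalars :=
  {| sc := R; sc0 := 0; sc1 := 1; scadd := Rplus; scmul := Rmult;
     scopp := Ropp; scabs := Rabs; scR := fun r => r |}.

Record Cplx := mkC { Cre : R; Cim : R }.
Definition Cadd (z w : Cplx) := mkC (Cre z + Cre w) (Cim z + Cim w).
Definition Cmul (z w : Cplx) :=
  mkC (Cre z * Cre w - Cim z * Cim w) (Cre z * Cim w + Cim z * Cre w).
Definition Copp (z : Cplx) := mkC (- Cre z) (- Cim z).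
Definition Cmod (z : Cplx) := sqrt (Cre z ^ 2 + Cim z ^ 2).

Definition C_scalars : Scalars :=
  {| sc := Cplx; sc0 := mkC 0 0; sc1 := mkC 1 0; scadd := Cadd; scmul := Cmul;
     scopp := Copp; scabs := Cmod; scR := fun r => mkC r 0 |}.

Definition Kof (b : bool) : Scalars := if b then R_scalars else C_scalars.

Record BanachSpace (K : Scalars) := {
  vT :> Type;
  v0 : vT;
  vadd : vT -> vT -> vT;
  vopp : vT -> vT;
  vscal : K -> vT -> vT;
  vnorm : vT -> R;
  vadd_assoc : forall x y z, vadd x (vadd y z) = vadd (vadd x y) z;
  vadd_comm : forall x y, vadd x y = vadd y x;
  vadd_0 : forall x, vadd x v0 = x;
  vadd_opp : forall x, vadd x (vopp x) = v0;
  vscal_1 : forall x, vscal (sc1 K) x = x;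
  vscal_mul : forall a c x, vscal a (vscal c x) = vscal (scmul K a c) x;
  vscal_addv : forall a x y, vscal a (vadd x y) = vadd (vscal a x) (vscal a y);
  vscal_adds : forall a c x, vscal (scadd K a c) x = vadd (vscal a x) (vscal c x);
  vnorm_eq0 : forall x, vnorm x = 0 -> x = v0;
  vnorm_scal : forall a x, vnorm (vscal a x) = scabs K a * vnorm x;
  vnorm_triangle : forall x y, vnorm (vadd x y) <= vnorm x + vnorm y;
  vcomplete : forall u : nat -> vT,
    (forall eps, 0 < eps -> exists N, forall n m, (n >= N)%nat -> (m >= N)%nat ->
        vnorm (vadd (u n) (vopp (u m))) < eps) ->
    exists l, forall eps, 0 < eps -> exists N, forall n, (n >= N)%nat ->
        vnorm (vadd (u n) (vopp l)) < eps
}.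

Arguments v0 {K} _.
Arguments vadd {K _}.
Arguments vopp {K _}.
Arguments vscal {K _}.
Arguments vnorm {K _}.

Definition vsub {K : Scalars} {X : BanachSpace K} (x y : X) : X := vadd x (vopp y).

Definition is_dual {K : Scalars} (X : BanachSpace K) (f : X -> K) : Prop :=
  (forall x y, f (vadd x y) = scadd K (f x) (f y)) /\
  (forall a x, f (vscal a x) = scmul K a (f x)) /\
  (exists M, forall x, scabs K (f x) <= M * vnorm x).

Definition dual_norm {K : Scalars} (X : BanachSpace K) (f : X -> K) (r : R) : Prop :=
  is_lub (fun t => exists x : X, vnorm x <= 1 /\ t = scabs K (f x)) r.

Definition InD {K : Scalars} (X : BanachSpace K) (x : X) (f : X -> K) : Prop :=
  is_dual X f /\
  exists nf, dual_norm X f nf /\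
    f x = scR K (nf * vnorm x) /\ nf * vnorm x = vnorm x ^ 2.

Definition Lip0 {K : Scalars} (X : BanachSpace K) (T : X -> X) : Prop :=
  T (v0 X) = v0 X /\
  exists L, forall x y : X, vnorm (vsub (T x) (T y)) <= L * vnorm (vsub x y).

Definition W {K : Scalars} (X : BanachSpace K) (T : X -> X) (lam : K) : Prop :=
  exists (x y : X) (f : X -> K), x <> y /\ InD X (vsub x y) f /\
    lam = scmul K (f (vsub (T x) (T y))) (scR K (/ (vnorm (vsub x y) ^ 2))).

Definition absW {K : Scalars} (X : BanachSpace K) (T : X -> X) (t : R) : Prop :=
  exists lam, W X T lam /\ t = scabs K lam.

Definition is_omega {K : Scalars} (X : BanachSpace K) (T : X -> X) (r : R) : Prop :=
  is_lub (absW X T) r.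

(* Main.v *)
Require Import Defs.
From Stdlib Require Import Reals Lra Lia Psatz.
Open Scope R_scope.

Definition re (b : bool) : Kof b -> R :=
  match b as b0 return Kof b0 -> R with
  | true => fun x => x
  | false => fun z => Cre z
  end.

Lemma re_add b (a c : Kof b) : re b (scadd _ a c) = re b a + re b c.
Proof. destruct b; reflexivity. Qed.

Lemma re_scR b r : re b (scR (Kof b) r) = r.
Proof. destruct b; reflexivity. Qed.

Lemma re_mulR b s (k : Kof b) : re b (scmul _ (scR _ s) k) = s * re b k.
Proof. destruct b; simpl; [reflexivity| destruct k; simpl; ring]. Qed.

Lemma re_mul_add b (c a d : Kof b) :
  re b (scmul _ c (scadd _ a d)) = re b (scmul _ c a) + re b (scmul _ c d).
Proof. destruct b; simpl; [ring| destruct c, a, d; simpl; ring]. Qed.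

Lemma Cmod_ge_abs_re a b0 : Rabs a <= sqrt (a ^ 2 + b0 ^ 2).
Proof.
  rewrite <- sqrt_Rsqr_abs. apply sqrt_le_1_alt. unfold Rsqr. nra.
Qed.

Lemma re_abs b (a : Kof b) : Rabs (re b a) <= scabs _ a.
Proof.
  destruct b; simpl. lra. destruct a as [p q]; unfold Cmod; simpl. apply Cmod_ge_abs_re.
Qed.

Lemma re_le b (a : Kof b) : re b a <= scabs _ a.
Proof. pose proof (re_abs b a). pose proof (Rle_abs (re b a)). lra. Qed.

Lemma re_ge b (a : Kof b) : - scabs _ a <= re b a.
Proof. pose proof (re_abs b a). pose proof (Rle_abs (- re b a)). rewrite Rabs_Ropp in H0. lra. Qed.

Lemma abs_ge0 b (a : Kof b) : 0 <= scabs _ a.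
Proof. destruct b; simpl. apply Rabs_pos. apply sqrt_pos. Qed.

Lemma abs_mul b (a c : Kof b) : scabs _ (scmul _ a c) = scabs _ a * scabs _ c.
Proof.
  destruct b; simpl. apply Rabs_mult. destruct a as [p q], c as [r s]; unfold Cmod; simpl.
  rewrite <- sqrt_mult_alt by nra. f_equal. ring.
Qed.

Lemma abs_scR b r : scabs (Kof b) (scR _ r) = Rabs r.
Proof.
  destruct b; simpl. reflexivity. unfold Cmod; simpl.
  rewrite <- sqrt_Rsqr_abs. f_equal. unfold Rsqr. ring.
Qed.

Lemma abs_opp1 b : scabs (Kof b) (scopp _ (sc1 _)) = 1.
Proof.
  destruct b; simpl. rewrite Rabs_Ropp, Rabs_R1. reflexivity.
  unfold Cmod; simpl. match goal with |- sqrt ?e = _ => replace e with 1 by ring end. apply sqrt_1.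
Qed.

Lemma add_opp1 b : scadd (Kof b) (sc1 _) (scopp _ (sc1 _)) = scR _ 0.
Proof. destruct b; simpl. change (1 + - 1 = 0); lra. unfold Cadd; simpl. f_equal; ring. Qed.

Lemma scR0_add b : scadd (Kof b) (scR _ 0) (scR _ 0) = scR _ 0.
Proof. destruct b; simpl. change (0 + 0 = 0); lra. unfold Cadd; simpl. f_equal; ring. Qed.

Lemma abs_scR_mul b s (k : Kof b) : scabs _ (scmul _ (scR _ s) k) = Rabs s * scabs _ k.
Proof. rewrite abs_mul, abs_scR. reflexivity. Qed.

Lemma rot b (a : Kof b) : exists c, scabs _ c = 1 /\ re b (scmul _ c a) = scabs _ a.
Proof.
  destruct b; simpl in *.
  - destruct (Rle_lt_dec 0 a).
    + exists 1. rewrite Rabs_R1, Rabs_pos_eq by lra. split; ring.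
    + exists (Ropp 1). rewrite Rabs_Ropp, Rabs_R1, Rabs_left by lra. split; ring.
  - destruct a as [p q]. unfold Cmod; simpl.
    replace (p * (p * 1) + q * (q * 1)) with (p*p+q*q) by ring.
    destruct (Req_dec (p * p + q * q) 0) as [H0|H0].
    + exists (mkC 1 0). simpl. rewrite H0, sqrt_0. split.
      match goal with |- sqrt ?e = _ => replace e with 1 by ring end. apply sqrt_1. nra.
    + set (r := sqrt (p * p + q * q)).
      assert (Hr : r * r = p * p + q * q) by (apply sqrt_sqrt; nra).
      assert (Hr0 : r <> 0) by (intro E; rewrite E in Hr; lra).
      exists (mkC (p / r) (- q / r)). simpl. split.
      * match goal with |- sqrt ?e = _ => replace e with 1 end. apply sqrt_1.
        field_simplify; auto. replace (p ^ 2 + q ^ 2) with (r * r) by (rewrite Hr; ring). field; auto.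
      * field_simplify; auto. replace (p ^ 2 + q ^ 2) with (r * r) by (rewrite Hr; ring). field; auto.
Qed.

Lemma abs_scR_1 b : scabs (Kof b) (scR _ 1) = 1.
Proof. rewrite abs_scR. apply Rabs_R1. Qed.

Arguments vadd_assoc {K _}. Arguments vadd_comm {K _}. Arguments vadd_0 {K _}.
Arguments vadd_opp {K _}. Arguments vscal_1 {K _}. Arguments vscal_mul {K _}.
Arguments vscal_addv {K _}. Arguments vscal_adds {K _}. Arguments vnorm_eq0 {K _}.
Arguments vnorm_scal {K _}. Arguments vnorm_triangle {K _}.

Section G.
Context {K : Scalars} {X : BanachSpace K}.

Lemma vadd_0l (x : X) : vadd (v0 X) x = x.
Proof. rewrite vadd_comm. apply vadd_0. Qed.

Lemma vadd_opp_l (x : X) : vadd (vopp x) x = v0 X.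
Proof. rewrite vadd_comm. apply vadd_opp. Qed.

Lemma opp_unique (x y : X) : vadd x y = v0 X -> y = vopp x.
Proof.
  intro H. rewrite <- (vadd_0l y), <- (vadd_opp_l x), <- vadd_assoc, H, vadd_0. reflexivity.
Qed.

Lemma vopp_vadd (a c : X) : vopp (vadd a c) = vadd (vopp a) (vopp c).
Proof.
  symmetry. apply opp_unique.
  rewrite <- vadd_assoc, (vadd_comm (vopp a)), (vadd_assoc c), vadd_opp, vadd_0l, vadd_opp.
  reflexivity.
Qed.

Lemma vopp_vopp (a : X) : vopp (vopp a) = a.
Proof. symmetry. apply opp_unique. apply vadd_opp_l. Qed.

Lemma vadd_swap (a b c : X) : vadd (vadd a b) c = vadd (vadd a c) b.
Proof. rewrite <- !vadd_assoc, (vadd_comm b). reflexivity. Qed.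

Lemma vadd_cancel_r (a c : X) : vadd (vadd a c) (vopp c) = a.
Proof. rewrite <- vadd_assoc, vadd_opp, vadd_0. reflexivity. Qed.

Lemma vadd_cancel_r' (a c : X) : vadd (vadd a (vopp c)) c = a.
Proof. rewrite <- vadd_assoc, vadd_opp_l, vadd_0. reflexivity. Qed.

Lemma vsub_eq0 (x y : X) : vsub x y = v0 X -> x = y.
Proof.
  unfold vsub; intro H. rewrite <- (vadd_cancel_r' x y), H, vadd_0l. reflexivity.
Qed.

Lemma self_double (s : X) : vadd s s = s -> s = v0 X.
Proof. intro H. rewrite <- (vadd_cancel_r s s), H, vadd_opp. reflexivity. Qed.

Lemma I1 (x p y : X) : vsub (vadd x p) y = vadd (vsub x y) p.
Proof. unfold vsub. apply vadd_swap. Qed.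

Lemma I2 (x p y x2 y2 : X) :
  vsub (vadd x p) y = vadd (vadd (vsub x2 y2) (vsub (vadd x p) x2)) (vopp (vsub y y2)).
Proof.
  unfold vsub. rewrite vopp_vadd, vopp_vopp.
  set (A := vadd x p).
  rewrite (vadd_comm (vadd x2 _)), (vadd_assoc (vadd A (vopp x2)) x2), vadd_cancel_r'.
  rewrite vadd_assoc, (vadd_swap A (vopp y2)), vadd_cancel_r'. reflexivity.
Qed.

Lemma I4 (x p x2 : X) : vsub x2 x = vadd p (vopp (vsub (vadd x p) x2)).
Proof.
  unfold vsub. rewrite vopp_vadd, vopp_vopp, vopp_vadd.
  rewrite (vadd_comm (vopp x) (vopp p)), vadd_assoc, vadd_assoc, vadd_opp, vadd_0l, vadd_comm.
  reflexivity.
Qed.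

Lemma I5 (x p y x2 y2 : X) :
  vsub x2 y2 = vadd (vadd (vadd (vsub x y) p) (vopp (vsub (vadd x p) x2))) (vsub y y2).
Proof.
  unfold vsub. rewrite (vopp_vadd (vadd x p)), vopp_vopp.
  rewrite (vadd_swap x (vopp y) p). set (A := vadd x p).
  rewrite (vadd_assoc (vadd A (vopp y)) (vopp A) x2), (vadd_swap A (vopp y) (vopp A)), vadd_opp, vadd_0l.
  rewrite (vadd_assoc (vadd (vopp y) x2) y), (vadd_comm (vopp y) x2), vadd_cancel_r'.
  reflexivity.
Qed.

Lemma I3 (a b a2 b2 : X) :
  vsub a2 b2 = vadd (vadd (vsub a b) (vsub a2 a)) (vopp (vsub b2 b)).
Proof.
  unfold vsub. rewrite vopp_vadd, vopp_vopp.
  rewrite (vadd_comm (vadd a (vopp b))), (vadd_assoc (vadd a2 (vopp a)) a), vadd_cancel_r'.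
  rewrite vadd_assoc, (vadd_swap a2 (vopp b)), vadd_cancel_r'. reflexivity.
Qed.

End G.

Section N.
Context {b : bool} {X : BanachSpace (Kof b)}.

Lemma vscal0 (x : X) : vscal (scR _ 0) x = v0 X.
Proof. apply self_double. rewrite <- vscal_adds, scR0_add. reflexivity. Qed.

Lemma vopp_scal (x : X) : vopp x = vscal (scopp _ (sc1 _)) x.
Proof.
  symmetry. apply opp_unique. rewrite <- (vscal_1 x) at 1.
  rewrite <- vscal_adds, add_opp1. apply vscal0.
Qed.

Lemma vnorm_opp (x : X) : vnorm (vopp x) = vnorm x.
Proof. rewrite vopp_scal, vnorm_scal, abs_opp1. ring. Qed.

Lemma vnorm0 : vnorm (v0 X) = 0.
Proof. rewrite <- (vscal0 (v0 X)), vnorm_scal, abs_scR, Rabs_R0. ring. Qed.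

Lemma vnorm_ge0 (x : X) : 0 <= vnorm x.
Proof.
  pose proof (vnorm_triangle x (vopp x)). rewrite vadd_opp, vnorm0, vnorm_opp in H. lra.
Qed.

Lemma vnorm_sub_sym (x y : X) : vnorm (vsub x y) = vnorm (vsub y x).
Proof.
  rewrite <- vnorm_opp. unfold vsub. rewrite vopp_vadd, vopp_vopp, vadd_comm. reflexivity.
Qed.

Lemma vnorm_pos (x y : X) : x <> y -> 0 < vnorm (vsub x y).
Proof.
  intro H. destruct (vnorm_ge0 (vsub x y)) as [H1|H1]; auto.
  exfalso. apply H, vsub_eq0, vnorm_eq0. auto.
Qed.

Lemma dual_v0 (g : X -> Kof b) : is_dual X g -> scabs _ (g (v0 X)) = 0.
Proof.
  intros [_ [Hs _]]. rewrite <- (vscal0 (v0 X)), Hs, abs_mul, abs_scR, Rabs_R0. ring.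
Qed.

Lemma dual_bound (g : X -> Kof b) nf : is_dual X g -> dual_norm X g nf ->
  forall z, scabs _ (g z) <= nf * vnorm z.
Proof.
  intros Hd [Hub _] z.
  destruct (vnorm_ge0 z) as [Hz|Hz].
  - assert (Hn : vnorm (vscal (scR _ (/ vnorm z)) z) = 1).
    { rewrite vnorm_scal, abs_scR, Rabs_pos_eq. field. lra. left. apply Rinv_0_lt_compat; lra. }
    assert (H1 := Hub (scabs _ (g (vscal (scR _ (/ vnorm z)) z)))).
    destruct Hd as [_ [Hs _]]. rewrite Hs, abs_mul, abs_scR, Rabs_pos_eq in H1.
    2: left; apply Rinv_0_lt_compat; lra.
    assert (H2 : / vnorm z * scabs _ (g z) <= nf).
    { apply H1. eexists. split; [rewrite Hn; lra|]. rewrite Hs, abs_mul, abs_scR, Rabs_pos_eq.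
      reflexivity. left; apply Rinv_0_lt_compat; lra. }
    apply (Rmult_le_compat_l (vnorm z)) in H2; [|lra].
    rewrite <- Rmult_assoc, Rinv_r in H2 by lra. lra.
  - rewrite <- Hz. symmetry in Hz. apply vnorm_eq0 in Hz. rewrite Hz, dual_v0; auto. lra.
Qed.

Definition Hf (c : Kof b) (g : X -> Kof b) (z : X) : R := re b (scmul _ c (g z)).

Lemma Hf_add c g : is_dual X g -> forall p q, Hf c g (vadd p q) = Hf c g p + Hf c g q.
Proof. intros [Ha _] p q. unfold Hf. rewrite Ha, re_mul_add. reflexivity. Qed.

Lemma Hf_v0 c g : is_dual X g -> Hf c g (v0 X) = 0.
Proof.
  intro Hd. pose proof (Hf_add c g Hd (v0 X) (v0 X)). rewrite vadd_0 in H. lra.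
Qed.

Lemma Hf_opp c g : is_dual X g -> forall p, Hf c g (vopp p) = - Hf c g p.
Proof.
  intros Hd p. pose proof (Hf_add c g Hd p (vopp p)). rewrite vadd_opp, Hf_v0 in H; auto. lra.
Qed.

Lemma Hf_sub c g : is_dual X g -> forall p q, Hf c g (vsub p q) = Hf c g p - Hf c g q.
Proof. intros Hd p q. unfold vsub. rewrite Hf_add, Hf_opp; auto. Qed.

Lemma Hf_bound c g nf : scabs _ c = 1 -> is_dual X g -> dual_norm X g nf ->
  forall z, Rabs (Hf c g z) <= nf * vnorm z.
Proof.
  intros Hc Hd Hn z. unfold Hf. eapply Rle_trans. apply re_abs.
  rewrite abs_mul, Hc, Rmult_1_l. apply dual_bound; auto.
Qed.

End N.

Lemma InD_norm b (X : BanachSpace (Kof b)) (u : X) g : 0 < vnorm u -> InD X u g ->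
  is_dual X g /\ dual_norm X g (vnorm u) /\ re b (g u) = vnorm u ^ 2.
Proof.
  intros Hu [Hd [nf [Hn [Hg He]]]].
  assert (nf = vnorm u).
  { apply (Rmult_eq_reg_r (vnorm u)); [|lra]. rewrite He. ring. }
  subst nf. split; [auto|split; [auto|]]. rewrite Hg, re_scR. lra.
Qed.

Lemma Hf1 b (X : BanachSpace (Kof b)) (g : X -> Kof b) z : Hf (scR _ 1) g z = re b (g z).
Proof. unfold Hf. rewrite re_mulR. ring. Qed.

Lemma Hf_p b (X : BanachSpace (Kof b)) (g : X -> Kof b) c s v : is_dual X g ->
  Hf (scR _ 1) g (vscal (scR _ s) (vscal c v)) = s * Hf c g v.
Proof.
  intros [_ [Hs _]]. rewrite Hf1. rewrite !Hs. unfold Hf. rewrite re_mulR. reflexivity.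
Qed.

Lemma divmul A D : 0 < D -> A / D * D = A.
Proof. intro; field; lra. Qed.

Lemma approx b (X : BanachSpace (Kof b))
  (Q : X -> X -> (X -> Kof b) -> Prop)
  (HQ : forall x y f, Q x y f -> x <> y /\ InD X (vsub x y) f)
  (Hdense : forall (x y : X) (eps : R), 0 < eps ->
     exists x' y' f, Q x' y' f /\ vnorm (vsub x x') < eps /\ vnorm (vsub y y') < eps)
  (T : X -> X) (L : R) (HL0 : 0 <= L)
  (HL : forall x y : X, vnorm (vsub (T x) (T y)) <= L * vnorm (vsub x y))
  (x y : X) (f : X -> Kof b) (Hxy : x <> y) (Hf0 : InD X (vsub x y) f)
  (eps : R) (Heps : 0 < eps) :
  exists x2 y2 g, Q x2 y2 g /\
    scabs _ (f (vsub (T x) (T y))) / vnorm (vsub x y) ^ 2 - eps <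
    scabs _ (g (vsub (T x2) (T y2))) / vnorm (vsub x2 y2) ^ 2.
Proof.
  set (u := vsub x y). set (n := vnorm u).
  assert (Hn : 0 < n) by (apply vnorm_pos; auto).
  destruct (InD_norm b X u f Hn Hf0) as [Hfd [Hfn Hfu]]. fold n in Hfn, Hfu.
  set (v := vsub (T x) (T y)). set (a := scabs _ (f v)). set (V := vnorm v).
  assert (Ha : 0 <= a) by apply abs_ge0.
  assert (HV : 0 <= V) by apply vnorm_ge0.
  destruct (rot b (f v)) as [c [Hc Hcv]]. fold a in Hcv.
  set (an := a / n).
  set (K0 := 4 + L * (V + 2)). set (M0 := V + 2).
  assert (HK0 : 0 < K0) by (unfold K0; nra).
  assert (Hden : 0 < K0 + an / n * M0 + 1).
  { assert (0 <= an / n * M0). { unfold an, M0. apply Rmult_le_pos; [|lra].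
      unfold Rdiv. repeat apply Rmult_le_pos; try apply Rlt_le, Rinv_0_lt_compat; lra. } lra. }
  set (s := Rmin 1 (eps * n / (2 * (K0 + an / n * M0 + 1)))).
  assert (Hs0 : 0 < s).
  { unfold s. apply Rmin_pos; [lra|]. apply Rdiv_lt_0_compat; nra. }
  assert (Hs1 : s <= 1) by apply Rmin_l.
  assert (Hs2 : s * (2 * (K0 + an / n * M0 + 1)) <= eps * n).
  { assert (s <= eps * n / (2 * (K0 + an / n * M0 + 1))) by apply Rmin_r.
    apply (Rmult_le_compat_r (2 * (K0 + an / n * M0 + 1))) in H; [|lra].
    assert (eps * n / (2 * (K0 + an / n * M0 + 1)) * (2 * (K0 + an / n * M0 + 1)) = eps * n)
      by (apply divmul; lra). lra. }
  set (p := vscal (scR _ s) (vscal c v)).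
  assert (Hp : vnorm p = s * V).
  { unfold p. rewrite !vnorm_scal, abs_scR, Hc, (Rabs_pos_eq s) by lra. unfold V. ring. }
  destruct (Hdense (vadd x p) y (s * s)) as [x2 [y2 [g [HQ2 [Hd1 Hd2]]]]]; [nra|].
  exists x2, y2, g. split; auto.
  destruct (HQ _ _ _ HQ2) as [Hxy2 Hg0].
  set (u2 := vsub x2 y2). set (m := vnorm u2).
  assert (Hm : 0 < m) by (apply vnorm_pos; auto).
  destruct (InD_norm b X u2 g Hm Hg0) as [Hgd [Hgn Hgu]]. fold m in Hgn, Hgu.
  set (d1 := vsub (vadd x p) x2). set (d2 := vsub y y2).
  fold d1 in Hd1. fold d2 in Hd2.
  set (del1 := vnorm d1). set (del2 := vnorm d2). change (del1 < s * s) in Hd1. change (del2 < s * s) in Hd2.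
  assert (Hdel1 : 0 <= del1) by apply vnorm_ge0.
  assert (Hdel2 : 0 <= del2) by apply vnorm_ge0.
  set (N := vnorm (vadd u p)).
  assert (HA : N >= n + s * an).
  { pose proof (Hf_bound (scR _ 1) f n (abs_scR_1 b) Hfd Hfn (vadd u p)) as H.
    rewrite Hf_add, Hf1, Hfu in H by auto. unfold p in H. rewrite Hf_p in H by auto.
    unfold Hf in H. rewrite Hcv in H. fold p N in H.
    pose proof (Rle_abs (n ^ 2 + s * a)).
    assert (n * N >= n * (n + s * an)). { unfold an. field_simplify; [|lra]. nra. }
    nra. }
  assert (HB : N <= m + del1 + del2).
  { unfold N, u. rewrite <- I1, (I2 x p y x2 y2). fold u2 d1 d2.
    eapply Rle_trans. apply vnorm_triangle. rewrite vnorm_opp.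
    pose proof (vnorm_triangle u2 d1). fold m del1 in H. fold del2. lra. }
  set (R' := Hf c g v).
  assert (HC : m * m <= m * n + s * R' + m * del1 + m * del2).
  { assert (E : Hf (scR _ 1) g u2 = Hf (scR _ 1) g (vadd u p) - Hf (scR _ 1) g d1 + Hf (scR _ 1) g d2).
    { assert (vadd u p = vadd (vadd u2 d1) (vopp d2)).
      { unfold u. rewrite <- I1. apply I2. }
      rewrite H, !Hf_add, Hf_opp by auto. ring. }
    rewrite Hf1, Hgu in E. rewrite Hf_add in E by auto. unfold p in E. rewrite Hf_p in E by auto.
    fold R' in E.
    pose proof (Hf_bound (scR _ 1) g m (abs_scR_1 b) Hgd Hgn u).
    pose proof (Hf_bound (scR _ 1) g m (abs_scR_1 b) Hgd Hgn d1).
    pose proof (Hf_bound (scR _ 1) g m (abs_scR_1 b) Hgd Hgn d2).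
    fold n in H. fold del1 in H0. fold del2 in H1.
    pose proof (Rle_abs (Hf (scR _ 1) g u)).
    pose proof (Rle_abs (- Hf (scR _ 1) g d1)) as H4. rewrite Rabs_Ropp in H4.
    pose proof (Rle_abs (Hf (scR _ 1) g d2)).
    assert (m ^ 2 = m * m) by ring. lra. }
  assert (HR' : R' >= m * (an - 4 * s)).
  { assert (s * R' >= s * (m * (an - 4 * s))).
    { assert (m * (m - n - del1 - del2 - (s * an - 4 * (s * s))) >= 0).
      { apply Rle_ge, Rmult_le_pos; lra. }
      nra. }
    nra. }
  set (v2 := vsub (T x2) (T y2)).
  set (e1 := vsub (T x2) (T x)). set (e2 := vsub (T y2) (T y)).
  assert (He1 : vnorm e1 <= L * (s * V + del1)).
  { unfold e1. eapply Rle_trans. apply HL. apply Rmult_le_compat_l; auto.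
    rewrite (I4 x p x2). eapply Rle_trans. apply vnorm_triangle. rewrite vnorm_opp, Hp.
    fold d1 del1. lra. }
  assert (He2 : vnorm e2 <= L * del2).
  { unfold e2. eapply Rle_trans. apply HL. apply Rmult_le_compat_l; auto.
    rewrite vnorm_sub_sym. fold d2 del2. lra. }
  assert (HD : Hf c g v2 >= R' - m * (vnorm e1 + vnorm e2)).
  { unfold v2. rewrite (I3 (T x) (T y)). rewrite !Hf_add, Hf_opp by auto. fold v e1 e2 R'.
    pose proof (Hf_bound c g m Hc Hgd Hgn e1).
    pose proof (Hf_bound c g m Hc Hgd Hgn e2).
    pose proof (Rle_abs (- Hf c g e1)). rewrite Rabs_Ropp in H1.
    pose proof (Rle_abs (Hf c g e2)). lra. }
  assert (HE : scabs _ (g v2) >= Hf c g v2).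
  { unfold Hf. pose proof (re_le b (scmul _ c (g v2))). rewrite abs_mul, Hc in H. lra. }
  assert (HF : m <= n + s * V + del1 + del2).
  { unfold m, u2. rewrite (I5 x p y x2 y2). fold u d1 d2.
    eapply Rle_trans. apply vnorm_triangle. fold del2.
    pose proof (vnorm_triangle (vadd u p) (vopp d1)). rewrite vnorm_opp in H. fold del1 in H.
    pose proof (vnorm_triangle u p). rewrite Hp in H0. fold n in H0. lra. }
  assert (HG : scabs _ (g v2) >= m * (an - s * K0)).
  { assert (m * (vnorm e1 + vnorm e2) <= m * (4 * s * 0 + L * (s * V + 2 * (s * s)))).
    { apply Rmult_le_compat_l; [lra|].
      assert (L * del1 <= L * (s * s)) by (apply Rmult_le_compat_l; lra).
      assert (L * del2 <= L * (s * s)) by (apply Rmult_le_compat_l; lra).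
      assert (L * (s * V + del1) = L * (s * V) + L * del1) by ring.
      assert (L * (s * V + 2 * (s * s)) = L * (s * V) + 2 * (L * (s * s))) by ring.
      lra. }
    assert (L * (s * V + 2 * (s * s)) <= s * (L * (V + 2))).
    { assert (L * (s * s) <= L * s) by (apply Rmult_le_compat_l; nra). nra. }
    assert (m * (L * (s * V + 2 * (s * s))) <= m * (s * (L * (V + 2)))) by (apply Rmult_le_compat_l; lra).
    unfold K0. nra. }
  fold v2. fold m u2.
  assert (Hm2 : 0 < m ^ 2) by nra.
  assert (Hg0' : 0 <= scabs _ (g v2)) by apply abs_ge0.
  set (t := a / n ^ 2 - eps / 2).
  assert (Hat : a / n ^ 2 = an / n) by (unfold an; field; lra).
  destruct (Rle_lt_dec t 0) as [Ht|Ht].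
  - assert (0 <= scabs _ (g v2) / m ^ 2) by (unfold Rdiv; apply Rmult_le_pos; [lra| left; apply Rinv_0_lt_compat; lra]). unfold t in Ht. lra.
  - assert (Hgoal : t * m ^ 2 <= scabs _ (g v2)).
    { assert (Htm : t * m <= an - s * K0).
      { assert (t * m <= t * (n + s * M0)).
        { apply Rmult_le_compat_l; [lra|]. unfold M0. nra. }
        assert (t * n = an - eps * n / 2).
        { unfold t. rewrite Hat. field. lra. }
        assert (t <= an / n * 1) by (unfold t; rewrite Hat; lra).
        assert (s * t * M0 <= s * (an / n) * M0).
        { apply Rmult_le_compat_r; [unfold M0; lra|]. apply Rmult_le_compat_l; lra. }
        nra. }
      assert (t * m * m <= (an - s * K0) * m) by (apply Rmult_le_compat_r; lra).
      nra. }
    apply (Rmult_le_compat_r (/ m ^ 2)) in Hgoal; [|apply Rlt_le, Rinv_0_lt_compat; lra].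
    rewrite Rmult_assoc, Rinv_r in Hgoal by lra. unfold Rdiv. unfold t in Hgoal. lra.
Qed.

Lemma lub_equiv (A B : R -> Prop) :
  (forall t, B t -> A t) ->
  (forall t, A t -> forall eps, 0 < eps -> exists t', B t' /\ t - eps < t') ->
  forall r, is_lub A r <-> is_lub B r.
Proof.
  intros HBA HAB r.
  assert (Hub : forall r, is_upper_bound A r <-> is_upper_bound B r).
  { intro r0. split.
    - intros H t Ht. apply H, HBA, Ht.
    - intros H t Ht. apply Rnot_lt_le. intro Hlt.
      destruct (HAB t Ht (t - r0)) as [t' [Ht' Hlt']]; [lra|].
      pose proof (H t' Ht'). lra. }
  split; intros [H1 H2]; split.
  - apply Hub, H1.
  - intros b0 Hb. apply H2, Hub, Hb.
  - apply Hub, H1.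
  - intros b0 Hb. apply H2, Hub, Hb.
Qed.

Lemma abs_val b (X : BanachSpace (Kof b)) (f : X -> Kof b) (w u : X) : 0 < vnorm u ->
  scabs _ (scmul _ (f w) (scR _ (/ (vnorm u ^ 2)))) = scabs _ (f w) / vnorm u ^ 2.
Proof.
  intro Hu. rewrite abs_mul, abs_scR, Rabs_pos_eq. reflexivity.
  left. apply Rinv_0_lt_compat. nra.
Qed.

Theorem corollary2p2 (b : bool) (X : BanachSpace (Kof b))
  (Q : X -> X -> (X -> Kof b) -> Prop)
  (HQ : forall x y f, Q x y f -> x <> y /\ InD X (vsub x y) f)
  (Hdense : forall (x y : X) (eps : R), 0 < eps ->
     exists x' y' f, Q x' y' f /\ vnorm (vsub x x') < eps /\ vnorm (vsub y y') < eps)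
  (T : X -> X) (HT : Lip0 X T) :
  forall r : R,
    is_omega X T r <->
    is_lub (fun t => exists x y f, Q x y f /\
              t = scabs (Kof b) (f (vsub (T x) (T y))) / vnorm (vsub x y) ^ 2) r.
Proof.
  destruct HT as [_ [L HL]].
  assert (HL' : forall x y : X, vnorm (vsub (T x) (T y)) <= Rabs L * vnorm (vsub x y)).
  { intros x y. eapply Rle_trans. apply HL. apply Rmult_le_compat_r.
    apply vnorm_ge0. apply Rle_abs. }
  apply lub_equiv.
  - intros t [x [y [f [Hq Ht]]]]. destruct (HQ _ _ _ Hq) as [Hxy Hf].
    exists (scmul _ (f (vsub (T x) (T y))) (scR _ (/ (vnorm (vsub x y) ^ 2)))).
    split.
    + exists x, y, f. auto.
    + rewrite abs_val; auto. apply vnorm_pos; auto.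
  - intros t [lam [[x [y [f [Hxy [Hf Hl]]]]] Ht]] eps Heps.
    destruct (approx b X Q HQ Hdense T (Rabs L) (Rabs_pos L) HL' x y f Hxy Hf eps Heps)
      as [x2 [y2 [g [Hq Hlt]]]].
    eexists. split. exists x2, y2, g. split; [exact Hq| reflexivity].
    rewrite Ht, Hl, abs_val; auto. apply vnorm_pos; auto.
Qed.
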